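(* Let $\mathcal C$ be an $\mathbb F_q$-conic in a Baer subplane $\mathcal B$ of $\mathrm{PG}(2,q^2)$ that is secant to $\ell_\infty$, and let the $\mathbb F_{q^2}$-conic $\mathcal C^+$ meet $\ell_\infty$ in the points $\bar P,\bar Q$ (possibly equal). Then in $\mathrm{PG}(4,q)$, $[\mathcal C]$ is a non-degenerate conic in the plane $[\mathcal B]$, and $[\mathcal C^+]\cap\Sigma_\infty=[P]\cup[Q]$. Moreover: (1) if $\bar P=\bar Q$ then $\bar P\in\mathcal B$ and $[\mathcal C]$ meets $\Sigma_\infty$ in the single point $[P]\cap[\mathcal B]$; (2) if $\bar P\ne\bar Q$ and $\bar P,\bar Q\in\mathcal B$, then $[\mathcal C]$ meets $\Sigma_\infty$ in the two points $[P]\cap[\mathcal B]$ and $[Q]\cap[\mathcal B]$; (3) if $\bar P\neq\bar Q$ and $\bar P,\bar Q\notin\mathcal B$, then $[\mathcal C]$ is a $(PQ^q)$-special conic.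
   Context: Bruck–Bose setting: $q$ a prime power; $\Sigma_\infty$ a hyperplane of $\mathrm{PG}(4,q)$ with regular spread $\mathcal S$; affine points $A$ of $\mathrm{PG}(2,q^2)$ correspond to points $[A]$ of $\mathrm{PG}(4,q)\setminus\Sigma_\infty$, points $\bar T\in\ell_\infty$ to spread lines $[T]$, lines $\ne\ell_\infty$ to planes not in $\Sigma_\infty$ containing a spread line. In $\mathrm{PG}(4,q^2)$ the transversals of $\mathcal S$ are conjugate lines $g,g^q$ (conjugation $X\mapsto X^q$ of coordinates) with $[T]^\star=TT^q$ where $T=[T]^\star\cap g$; $\mathcal V^\star$ denotes the extension to $\mathrm{PG}(4,q^2)$ of a set defined by equations over $\mathbb F_q$. An $\mathbb F_{q^2}$-conic is a non-degenerate conic of $\mathrm{PG}(2,q^2)$; an $\mathbb F_q$-conic is a non-degenerate conic of a Baer subplane; for an $\mathbb F_q$-conic $\mathcal C$, $\mathcal C^+$ is the unique $\mathbb F_{q^2}$-conic containing it. For a non-degenerate conic $\mathcal O$ of $\mathrm{PG}(2,q^2)$ with equation $f=0$, writing $f=f_\infty+\tau f_0$ after substituting $x=x_0+x_1\tau$, $y=y_0+y_1\tau$ ($\tau$ a primitive element of $\mathbb F_{q^2}$, $f_\infty,f_0$ quadratic forms over $\mathbb F_q$ in $(x_0,x_1,y_0,y_1,z)$), $[\mathcal O]$ is the intersection of the quadrics $f_\infty=0$, $f_0=0$ of $\mathrm{PG}(4,q)$; its affine points are the $[A]$, $A\in\mathcal O$ affine. For a Baer subplane $\mathcal B$ secant to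 $\ell_\infty$ (meeting it in a Baer subline), $[\mathcal B]$ is the plane of $\mathrm{PG}(4,q)$, not in $\Sigma_\infty$ and containing no spread line, whose affine points are the $[X]$, $X$ affine in $\mathcal B$; for $\mathcal C\subset\mathcal B$, $[\mathcal C]$ denotes the closure in $[\mathcal B]$ of $\{[X]: X\in\mathcal C \text{ affine}\}$ (its points on $\Sigma_\infty$ being $[T]\cap[\mathcal B]$ for $\bar T\in\mathcal C\cap\ell_\infty$). For distinct points $P,Q\in g$, a non-degenerate conic $\mathcal N$ of $\mathrm{PG}(4,q)$ is $(PQ^q)$-special if $\mathcal N^\star$ contains one point of the line $PQ^q$ and one point of the line $P^qQ$. *)

(* Defs.v *)
(* K : finite field with #|K| = q^2 (i.e. GF(q^2)); GF(q) is the subfield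
   {x | x^q = x}; conjugation is x |-> x^q.  All projective spaces are
   modelled by nonzero row vectors over K, points of PG(n,q) being those
   having a representative with all coordinates in GF(q). *)
From HB Require Import structures.
From mathcomp Require Import all_boot all_order all_algebra all_field.
Set Implicit Arguments. Unset Strict Implicit. Unset Printing Implicit Defensive.
Import GRing.Theory.
Local Open Scope ring_scope.

Definition co (K : finFieldType) (n : nat) (w : 'rV[K]_n.+1) (k : nat) : K :=
  w ord0 (inord k).

Definition row3 (K : finFieldType) (a b c : K) : 'rV[K]_3 :=
  \row_(i < 3) nth 0 [:: a; b; c] i.
Definition row5 (K : finFieldType) (a b c d e : K) : 'rV[K]_5 :=
  \row_(i < 5) nth 0 [:: a; b; c; d; e] i.

Definition cnj (K : finFieldType) (q : nat) (x : K) : K := x ^+ q.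
Definition inF (K : finFieldType) (q : nat) (x : K) : bool := x ^+ q == x.
Definition Fvec (K : finFieldType) (q : nat) (n : nat) (w : 'rV[K]_n) : Prop :=
  forall i, inF q (w ord0 i).
Definition vconj (K : finFieldType) (q : nat) (n : nat) (v : 'rV[K]_n) : 'rV[K]_n :=
  map_mx (cnj q) v.

Definition peq (K : finFieldType) (n : nat) (u v : 'rV[K]_n) : Prop :=
  exists c : K, c != 0 /\ u = c *: v.

Definition Fpt (K : finFieldType) (q : nat) (n : nat) (p : 'rV[K]_n) : Prop :=
  exists w, Fvec q w /\ w != 0 /\ peq p w.

(* ternary quadratic form a x^2 + b y^2 + c z^2 + f yz + g zx + h xy,
   coefficients (a,b,c,f,g,h) = (c0,...,c5) *)
Definition qf (K : finFieldType) (c : 'rV[K]_6) (x : 'rV[K]_3) : K :=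
  co c 0 * co x 0 ^+ 2 + co c 1 * co x 1 ^+ 2 + co c 2 * co x 2 ^+ 2
  + co c 3 * co x 1 * co x 2 + co c 4 * co x 2 * co x 0 + co c 5 * co x 0 * co x 1.

(* characteristic-free discriminant 4abc + fgh - af^2 - bg^2 - ch^2;
   the conic is non-degenerate iff it is nonzero *)
Definition qdisc (K : finFieldType) (c : 'rV[K]_6) : K :=
  4%:R * co c 0 * co c 1 * co c 2 + co c 3 * co c 4 * co c 5
  - co c 0 * co c 3 ^+ 2 - co c 1 * co c 4 ^+ 2 - co c 2 * co c 5 ^+ 2.

Definition Fconic (K : finFieldType) (q : nat) (c : 'rV[K]_6) : Prop :=
  Fvec q c /\ qdisc c != 0.

Definition linf (K : finFieldType) (X : 'rV[K]_3) : Prop := co X 2 = 0.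

(* Baer subplane B_M = image of PG(2,q) under the homography x |-> x M *)
Definition inB (K : finFieldType) (q : nat) (M : 'M[K]_3) (X : 'rV[K]_3) : Prop :=
  exists x, Fvec q x /\ x != 0 /\ peq X (x *m M).

(* B_M is secant to l_infinity: l_infinity meets B_M in (at least, hence
   exactly q+1) two distinct points, i.e. in a Baer subline *)
Definition secant (K : finFieldType) (q : nat) (M : 'M[K]_3) : Prop :=
  exists X Y, inB q M X /\ inB q M Y /\ linf X /\ linf Y /\ ~ peq X Y.

(* the F_q-conic C of B_M with equation c (in the GF(q)-coordinates of B_M) *)
Definition inC (K : finFieldType) (q : nat) (M : 'M[K]_3) (c : 'rV[K]_6)
  (X : 'rV[K]_3) : Prop :=
  exists x, Fvec q x /\ x != 0 /\ qf c x = 0 /\ peq X (x *m M).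

(* equation f of the F_{q^2}-conic C^+ (same equation, over GF(q^2)) *)
Definition fplus (K : finFieldType) (M : 'M[K]_3) (c : 'rV[K]_6) (X : 'rV[K]_3) : K :=
  qf c (X *m invmx M).
Definition inCplus (K : finFieldType) (M : 'M[K]_3) (c : 'rV[K]_6) (X : 'rV[K]_3) : Prop :=
  X != 0 /\ fplus M c X = 0.

(* x = x0 + x1 tau with x0, x1 in GF(q) *)
Definition d1 (K : finFieldType) (q : nat) (tau x : K) : K :=
  (x - cnj q x) / (tau - cnj q tau).
Definition d0 (K : finFieldType) (q : nat) (tau x : K) : K :=
  x - d1 q tau x * tau.

(* [A] = (x0,x1,y0,y1,1) for the affine point A = (x,y,1) *)
Definition bbv (K : finFieldType) (q : nat) (tau : K) (X : 'rV[K]_3) : 'rV[K]_5 :=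
  let x := co X 0 / co X 2 in let y := co X 1 / co X 2 in
  row5 (d0 q tau x) (d1 q tau x) (d0 q tau y) (d1 q tau y) 1.

Definition sinf (K : finFieldType) (p : 'rV[K]_5) : Prop := co p 4 = 0.

Definition inSpread (K : finFieldType) (q : nat) (tau : K) (T : 'rV[K]_3)
  (p : 'rV[K]_5) : Prop :=
  exists w, Fvec q w /\ w != 0 /\ peq p w /\ co w 4 = 0 /\
    exists e : K, co w 0 + co w 1 * tau = e * co T 0 /\
                  co w 2 + co w 3 * tau = e * co T 1.

Definition BBspace (K : finFieldType) (q : nat) (tau : K) (M : 'M[K]_3) : 'M[K]_5 :=
  (\sum_(x : 'rV[K]_3 | [forall i, inF q (x ord0 i)] && (co (x *m M) 2 != 0))
      <<bbv q tau (x *m M)>>)%MS.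

Definition inBB (K : finFieldType) (q : nat) (tau : K) (M : 'M[K]_3)
  (p : 'rV[K]_5) : Prop :=
  Fpt q p /\ (p <= BBspace q tau M)%MS.

(* [C] : the [X], X affine in C, together with [T] /\ [B] for T in C on l_inf *)
Definition inCC (K : finFieldType) (q : nat) (tau : K) (M : 'M[K]_3) (c : 'rV[K]_6)
  (p : 'rV[K]_5) : Prop :=
  (exists X, inC q M c X /\ co X 2 != 0 /\ peq p (bbv q tau X)) \/
  (exists T, inC q M c T /\ linf T /\ inSpread q tau T p /\ inBB q tau M p).

(* [O] for O = C^+ : points (x0,x1,y0,y1,z) of PG(4,q) with
   f(x0 + x1 tau, y0 + y1 tau, z) = f_inf + tau f_0 = 0, i.e. f_inf = f_0 = 0 *)
Definition inOO (K : finFieldType) (q : nat) (tau : K) (M : 'M[K]_3) (c : 'rV[K]_6)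
  (p : 'rV[K]_5) : Prop :=
  exists w, Fvec q w /\ w != 0 /\ peq p w /\
    fplus M c (row3 (co w 0 + co w 1 * tau) (co w 2 + co w 3 * tau) (co w 4)) = 0.

(* non-degenerate conic of PG(4,q): image of a non-degenerate conic of PG(2,q)
   under an injective GF(q)-linear map x |-> x N *)
Definition Fconic4 (K : finFieldType) (q : nat) (N : 'M[K]_(3,5)) (c : 'rV[K]_6) : Prop :=
  (forall i j, inF q (N i j)) /\ row_free N /\ Fconic q c.
Definition inConic4 (K : finFieldType) (q : nat) (N : 'M[K]_(3,5)) (c : 'rV[K]_6)
  (p : 'rV[K]_5) : Prop :=
  exists x, Fvec q x /\ x != 0 /\ qf c x = 0 /\ peq p (x *m N).
Definition inConic4s (K : finFieldType) (N : 'M[K]_(3,5)) (c : 'rV[K]_6)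
  (X : 'rV[K]_5) : Prop :=
  exists x, x != 0 /\ qf c x = 0 /\ peq X (x *m N).

(* the point T = [T]^* /\ g of the transversal g = {x0 + x1 tau^q = 0 =
   y0 + y1 tau^q, z = 0} corresponding to T-bar = (a,b,0) *)
Definition gpt (K : finFieldType) (q : nat) (tau : K) (T : 'rV[K]_3) : 'rV[K]_5 :=
  row5 (- cnj q tau * co T 0) (co T 0) (- cnj q tau * co T 1) (co T 1) 0.

Definition onLine (K : finFieldType) (U V X : 'rV[K]_5) : Prop :=
  X != 0 /\ exists a b : K, X = a *: U + b *: V.

Definition meets1 (K : finFieldType) (N : 'M[K]_(3,5)) (c : 'rV[K]_6)
  (U V : 'rV[K]_5) : Prop :=
  exists X, inConic4s N c X /\ onLine U V X /\
    forall Y, inConic4s N c Y -> onLine U V Y -> peq Y X.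

Definition special (K : finFieldType) (q : nat) (N : 'M[K]_(3,5)) (c : 'rV[K]_6)
  (P Q : 'rV[K]_5) : Prop :=
  meets1 N c P (vconj q Q) /\ meets1 N c (vconj q P) Q.

(* Main.v *)
Require Import Defs.
From HB Require Import structures.
From mathcomp Require Import all_boot all_order all_algebra all_field.
From mathcomp Require abelian pgroup.
From mathcomp Require Import ring.
Set Implicit Arguments. Unset Strict Implicit. Unset Printing Implicit Defensive.
Import GRing.Theory.
Local Open Scope ring_scope.

Lemma pnat_q (K : finFieldType) (q : nat) : #|K| = (q ^ 2)%N -> [pchar K].-nat q.
Proof.
move=> hq; have [p pp pc] := finPcharP K.
rewrite (eq_pnat _ (pcharf_eq pc)).
have : p.-nat #|K|.
  have := abelian.abelem_pgroup (abelian.fin_ring_pchar_abelem pc).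
  by rewrite /pgroup.pgroup cardsT.
apply: pnat_dvd; rewrite hq; exact: dvdn_mulr.
Qed.

Lemma cnjD (K : finFieldType) (q : nat) : #|K| = (q ^ 2)%N ->
  forall x y : K, cnj q (x + y) = cnj q x + cnj q y.
Proof. by move=> hq x y; rewrite /cnj exprDn_pchar // pnat_q. Qed.
Lemma cnjM (K : finFieldType) (q : nat) (x y : K) : cnj q (x * y) = cnj q x * cnj q y.
Proof. by rewrite /cnj exprMn. Qed.
Lemma cnjK (K : finFieldType) (q : nat) : #|K| = (q ^ 2)%N ->
  forall x : K, cnj q (cnj q x) = x.
Proof. by move=> hq x; rewrite /cnj -exprM -[(q*q)%N]/(q^2)%N -hq expf_card. Qed.

Lemma q_gt1 (K : finFieldType) (q : nat) : #|K| = (q ^ 2)%N -> (1 < q)%N.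
Proof.
move=> hq; have := finNzRing_gt1 K; rewrite hq.
by case: q {hq} => [|[|q]].
Qed.

Section Basics.
Variables (K : finFieldType) (q : nat).
Hypothesis hq : #|K| = (q ^ 2)%N.

Lemma cnj0 : cnj q (0:K) = 0.
Proof. by rewrite /cnj expr0n; have := q_gt1 hq; case: q. Qed.
Lemma cnj1 : cnj q (1:K) = 1.
Proof. by rewrite /cnj expr1n. Qed.
Lemma cnjN (x : K) : cnj q (- x) = - cnj q x.
Proof. by apply/eqP; rewrite -subr_eq0 opprK -cnjD // addNr cnj0. Qed.
Lemma cnjB (x y : K) : cnj q (x - y) = cnj q x - cnj q y.
Proof. by rewrite cnjD // cnjN. Qed.
Lemma cnjV (x : K) : cnj q (x^-1) = (cnj q x)^-1.
Proof. by rewrite /cnj exprVn. Qed.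
Lemma cnj_sum n (f : 'I_n -> K) : cnj q (\sum_(i < n) f i) = \sum_(i < n) cnj q (f i).
Proof. by apply: (big_morph _ (cnjD hq) cnj0). Qed.
Lemma cnj_eq0 (x : K) : (cnj q x == 0) = (x == 0).
Proof. by rewrite /cnj expf_eq0; have := q_gt1 hq; case: q. Qed.
Lemma cnj_inj (x y : K) : cnj q x = cnj q y -> x = y.
Proof. by move=> h; rewrite -(cnjK hq x) h cnjK. Qed.

Lemma inFE (x : K) : inF q x = (cnj q x == x). Proof. by []. Qed.
Lemma inF0 : inF q (0:K). Proof. by rewrite inFE cnj0. Qed.
Lemma inF1 : inF q (1:K). Proof. by rewrite inFE cnj1. Qed.
Lemma inFD (x y : K) : inF q x -> inF q y -> inF q (x + y).
Proof. by rewrite !inFE cnjD // => /eqP-> /eqP->. Qed.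
Lemma inFN (x : K) : inF q x -> inF q (- x).
Proof. by rewrite !inFE cnjN => /eqP->. Qed.
Lemma inFB (x y : K) : inF q x -> inF q y -> inF q (x - y).
Proof. by move=> ? ?; rewrite inFD // inFN. Qed.
Lemma inFM (x y : K) : inF q x -> inF q y -> inF q (x * y).
Proof. by rewrite !inFE cnjM => /eqP-> /eqP->. Qed.
Lemma inFV (x : K) : inF q x -> inF q (x^-1).
Proof. by rewrite !inFE cnjV => /eqP->. Qed.
Lemma inF_sum n (f : 'I_n -> K) : (forall i, inF q (f i)) -> inF q (\sum_(i < n) f i).
Proof. by move=> h; rewrite inFE cnj_sum; apply/eqP/eq_bigr => i _; apply/eqP/h. Qed.
Lemma inFn (n : nat) : inF q (n%:R : K).
Proof. elim: n => [|n ih]; first exact: inF0. by rewrite -addn1 natrD inFD // inF1. Qed.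

Variable tau : K.
Hypothesis htau : (q ^ 2 - 1)%N.-primitive_root tau.

Lemma tau_nF : cnj q tau != tau.
Proof.
have q1 := q_gt1 hq.
have t0 : tau != 0.
  apply/negP=> /eqP t0; have := prim_expr_order htau; rewrite t0 expr0n.
  case: (q^2-1)%N (prim_order_gt0 htau) => // n _ /eqP; by rewrite eq_sym oner_eq0.
apply/negP => /eqP h.
have : tau ^+ (q - 1) == 1.
  have : tau ^+ (q-1) * tau = tau by rewrite -exprSr subn1 prednK ?h // ltnW.
  by move=> e; apply/eqP; apply: (mulIf t0); rewrite e mul1r.
rewrite -(prim_order_dvd htau) => /dvdn_leq.
have : (0 < q - 1)%N by rewrite subn_gt0.
move=> -> /(_ isT); rewrite leqNgt => /negP; apply.
rewrite ltn_sub2r //; first by rewrite (ltn_trans q1) // -{1}(expn1 q) ltn_exp2l.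
by rewrite -{1}(expn1 q) ltn_exp2l.
Qed.

Definition tq := cnj q tau.
Lemma dtau_neq0 : tau - tq != 0.
Proof. by rewrite subr_eq0 eq_sym tau_nF. Qed.

Lemma d1_inF (x : K) : inF q (d1 q tau x).
Proof.
rewrite inFE /d1 cnjM cnjV !cnjB !cnjK //.
by rewrite -mulrNN -invrN !opprB.
Qed.
Lemma inF_cnj (x : K) : inF q x -> cnj q x = x.
Proof. by move/eqP. Qed.
Lemma d1E (x : K) : d1 q tau x * (tau - tq) = x - cnj q x.
Proof. by rewrite /d1 divfK ?dtau_neq0. Qed.
Lemma d0_inF (x : K) : inF q (d0 q tau x).
Proof.
rewrite inFE /d0 cnjB // cnjM (inF_cnj (d1_inF x)) -/tq.
have e := d1E x; set a := d1 q tau x in e *; set cx := cnj q x in e *.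
apply/eqP; rewrite -(subrK cx x) -e; ring.
Qed.
Lemma d01E (x : K) : d0 q tau x + d1 q tau x * tau = x.
Proof. by rewrite /d0 subrK. Qed.
Lemma d01qE (x : K) : d0 q tau x + d1 q tau x * tq = cnj q x.
Proof.
rewrite /d0; have e := d1E x; set a := d1 q tau x in e *; set cx := cnj q x in e *.
rewrite -(subrK cx x) -e; ring.
Qed.
Lemma F_indep (a b : K) : inF q a -> inF q b -> a + b * tau = 0 -> a = 0 /\ b = 0.
Proof.
move=> ha hb e.
have e2 : a + b * tq = 0 by rewrite -(inF_cnj ha) -(inF_cnj hb) -cnjM -cnjD // e cnj0.
have : b * (tau - tq) = 0.
  have -> : b * (tau - tq) = (a + b*tau) - (a + b*tq) by ring.
  by rewrite e e2 subrr.
move/eqP; rewrite mulf_eq0 (negbTE dtau_neq0) orbF => /eqP b0.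
by move: e; rewrite b0 mul0r addr0.
Qed.
Lemma d1_uniq (a b : K) : inF q a -> inF q b -> d1 q tau (a + b * tau) = b.
Proof.
move=> ha hb; apply/eqP; rewrite -subr_eq0; apply/eqP.
have := d01E (a + b * tau) => e.
have h1 : inF q (d0 q tau (a + b * tau) - a) by rewrite inFB // d0_inF.
have h2 : inF q (d1 q tau (a + b * tau) - b) by rewrite inFB // d1_inF.
have h3 : (d0 q tau (a + b * tau) - a) + (d1 q tau (a + b * tau) - b) * tau = 0.
  by rewrite mulrBl addrACA e; ring.
by case: (F_indep h1 h2 h3).
Qed.
Lemma d0_uniq (a b : K) : inF q a -> inF q b -> d0 q tau (a + b * tau) = a.
Proof. by move=> ha hb; rewrite /d0 d1_uniq // addrK. Qed.
End Basics.

Lemma co_row3 (K : finFieldType) (a b c : K) k : (k < 3)%N ->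
  co (row3 a b c) k = nth 0 [:: a; b; c] k.
Proof. by move=> hk; rewrite /co mxE inordK. Qed.
Lemma co_row5 (K : finFieldType) (a b c d e : K) k : (k < 5)%N ->
  co (row5 a b c d e) k = nth 0 [:: a; b; c; d; e] k.
Proof. by move=> hk; rewrite /co mxE inordK. Qed.

Lemma ord_inord n (i : 'I_n.+1) : i = inord (val i).
Proof. by apply/val_inj; rewrite /= inordK. Qed.

Lemma rv_eq (K : finFieldType) n (u v : 'rV[K]_n.+1) :
  (forall k, (k < n.+1)%N -> co u k = co v k) -> u = v.
Proof.
move=> h; apply/rowP => i; rewrite (ord_inord i); exact: h (ltn_ord i).
Qed.

Lemma co_mul3 (K : finFieldType) n (x : 'rV[K]_3) (A : 'M[K]_(3,n.+1)) k :
  co (x *m A) k = co x 0 * A (inord 0) (inord k) + co x 1 * A (inord 1) (inord k)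
                + co x 2 * A (inord 2) (inord k).
Proof.
rewrite /co mxE !big_ord_recr big_ord0 /= add0r.
by congr (_ + _ + _); congr (x _ _ * A _ _); apply/val_inj => /=; rewrite inordK.
Qed.
Lemma co_mul5 (K : finFieldType) n (x : 'rV[K]_5) (A : 'M[K]_(5,n.+1)) k :
  co (x *m A) k = co x 0 * A (inord 0) (inord k) + co x 1 * A (inord 1) (inord k)
                + co x 2 * A (inord 2) (inord k) + co x 3 * A (inord 3) (inord k)
                + co x 4 * A (inord 4) (inord k).
Proof.
rewrite /co mxE !big_ord_recr big_ord0 /= add0r.
by congr (_ + _ + _ + _ + _); congr (x _ _ * A _ _); apply/val_inj => /=; rewrite inordK.
Qed.
Lemma coZ (K : finFieldType) n (u : 'rV[K]_n.+1) a k : co (a *: u) k = a * co u k.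
Proof. by rewrite /co mxE. Qed.
Lemma coD (K : finFieldType) n (u v : 'rV[K]_n.+1) k : co (u + v) k = co u k + co v k.
Proof. by rewrite /co mxE. Qed.
Lemma co0 (K : finFieldType) n k : co (0 : 'rV[K]_n.+1) k = 0.
Proof. by rewrite /co mxE. Qed.

Definition Emat (K : finFieldType) (t : K) : 'M[K]_(5,3) :=
  \matrix_(i < 5, j < 3) nth 0 [:: nth 0 [:: 1; 0; 0] j; nth 0 [:: t; 0; 0] j;
      nth 0 [:: 0; 1; 0] j; nth 0 [:: 0; t; 0] j; nth 0 [:: 0; 0; 1] j] i.

Lemma mulE (K : finFieldType) (w : 'rV[K]_5) t :
  w *m Emat t = row3 (co w 0 + co w 1 * t) (co w 2 + co w 3 * t) (co w 4).
Proof.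
apply: rv_eq => k hk; rewrite co_mul5 !mxE !inordK // co_row3 //.
by case: k hk => [|[|[|]]] //= _; ring.
Qed.

Section Peq.
Variables (K : finFieldType) (n : nat).
Implicit Types u v w : 'rV[K]_n.

Lemma peq_refl u : peq u u.
Proof. by exists 1; rewrite oner_neq0 scale1r. Qed.
Lemma peq_sym u v : peq u v -> peq v u.
Proof.
case=> k [k0 ->]; exists k^-1; split; first by rewrite invr_eq0.
by rewrite scalerA mulVf // scale1r.
Qed.
Lemma peq_trans u v w : peq u v -> peq v w -> peq u w.
Proof.
case=> k [k0 ->] [l [l0 ->]]; exists (k * l); split; first by rewrite mulf_neq0.
by rewrite scalerA.
Qed.
Lemma peq_nz u v : peq u v -> (u == 0) = (v == 0).
Proof. by case=> k [k0 ->]; rewrite scaler_eq0 (negbTE k0). Qed.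
Lemma peqZ u k : k != 0 -> peq (k *: u) u.
Proof. by move=> k0; exists k. Qed.
Lemma peqZ2 u v k : k != 0 -> peq u v -> peq (k *: u) v.
Proof. by move=> k0 h; apply: peq_trans (peqZ _ k0) h. Qed.
End Peq.

Section Vec.
Variables (K : finFieldType) (q : nat).
Hypothesis hq : #|K| = (q ^ 2)%N.

Lemma co_vconj n (u : 'rV[K]_n.+1) k : co (vconj q u) k = cnj q (co u k).
Proof. by rewrite /co mxE. Qed.
Lemma vconjM m n p (A : 'M[K]_(m,n)) (B : 'M[K]_(n,p)) :
  map_mx (cnj q) (A *m B) = map_mx (cnj q) A *m map_mx (cnj q) B.
Proof.
apply/matrixP => i j; rewrite !mxE cnj_sum //; apply: eq_bigr => k _.
by rewrite !mxE cnjM.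
Qed.
Lemma vconjZ m n (A : 'M[K]_(m,n)) a : map_mx (cnj q) (a *: A) = cnj q a *: map_mx (cnj q) A.
Proof. by apply/matrixP => i j; rewrite !mxE cnjM. Qed.
Lemma vconjD m n (A B : 'M[K]_(m,n)) :
  map_mx (cnj q) (A + B) = map_mx (cnj q) A + map_mx (cnj q) B.
Proof. by apply/matrixP => i j; rewrite !mxE cnjD. Qed.
Lemma vconjN m n (A : 'M[K]_(m,n)) : map_mx (cnj q) (- A) = - map_mx (cnj q) A.
Proof. by apply/matrixP => i j; rewrite !mxE cnjN. Qed.
Lemma vconjK m n (A : 'M[K]_(m,n)) : map_mx (cnj q) (map_mx (cnj q) A) = A.
Proof. by apply/matrixP => i j; rewrite !mxE cnjK. Qed.
Lemma vconj0 m n : map_mx (cnj q) (0 : 'M[K]_(m,n)) = 0.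
Proof. by apply/matrixP => i j; rewrite !mxE cnj0. Qed.
Lemma vconj_eq0 m n (A : 'M[K]_(m,n)) : (map_mx (cnj q) A == 0) = (A == 0).
Proof.
apply/eqP/eqP => [h|->]; last exact: vconj0.
by rewrite -(vconjK A) h vconj0.
Qed.
Lemma FvecP n (u : 'rV[K]_n) : Fvec q u <-> vconj q u = u.
Proof.
split=> [h|h i]; first by apply/rowP => i; rewrite mxE; apply/eqP/h.
by apply/eqP; rewrite -{2}h mxE.
Qed.
Lemma Fmx_conj m n (A : 'M[K]_(m,n)) : (forall i j, inF q (A i j)) -> map_mx (cnj q) A = A.
Proof. by move=> h; apply/matrixP => i j; rewrite mxE; apply/eqP/h. Qed.

Lemma qfZ (c : 'rV[K]_6) (x : 'rV[K]_3) a : qf c (a *: x) = a ^+ 2 * qf c x.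
Proof. rewrite /qf !coZ; ring. Qed.
Lemma qf_conj (c : 'rV[K]_6) (x : 'rV[K]_3) : Fvec q c ->
  qf c (vconj q x) = cnj q (qf c x).
Proof.
move=> hc; have hcc k : cnj q (co c k) = co c k by rewrite /co; apply/eqP/hc.
have cX (a : K) : cnj q (a ^+ 2) = cnj q a ^+ 2 by rewrite /cnj exprAC.
rewrite /qf !co_vconj !cnjD // ?cX !cnjM ?cX !hcc; ring.
Qed.
End Vec.

Lemma nz_co (K : finFieldType) n (u : 'rV[K]_n.+1) : u != 0 -> exists j, (j < n.+1)%N /\ co u j != 0.
Proof.
move=> nz; case: (boolP [exists j : 'I_n.+1, u ord0 j != 0]) => [/existsP [j hj]|/existsPn h].
  by exists (val j); rewrite ltn_ord /co -ord_inord.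
case/eqP: nz; apply/rowP => i; rewrite mxE.
by have := h i; rewrite negbK => /eqP.
Qed.

Lemma prop3 (K : finFieldType) (a b : 'rV[K]_3) : b != 0 ->
  co a 1 * co b 2 = co a 2 * co b 1 -> co a 2 * co b 0 = co a 0 * co b 2 ->
  co a 0 * co b 1 = co a 1 * co b 0 -> exists k, a = k *: b.
Proof.
move=> /nz_co [j [hj nzj]] e1 e2 e3; exists (co a j / co b j).
apply: rv_eq => k hk; rewrite coZ.
case: j hj nzj => [|[|[|]]] // _ nzj; apply/(mulIf nzj); rewrite mulrAC divfK //;
  case: k hk => [|[|[|]]] // _; rewrite ?e1 ?e2 ?e3; first [ring | by rewrite e1; ring
  | by rewrite e2; ring | by rewrite e3; ring | idtac].
all: try (rewrite -e1; ring); try (rewrite -e2; ring); try (rewrite -e3; ring).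
Qed.

Lemma L7 (K : finFieldType) (q : nat) (t : 'rV[K]_3) k : #|K| = (q ^ 2)%N ->
  t != 0 -> vconj q t = k *: t ->
  exists w, Fvec q w /\ w != 0 /\ exists mu, mu != 0 /\ t = mu *: w.
Proof.
move=> hq t0 et; have [j [hj tj]] := nz_co t0.
have k0 : k != 0.
  apply: contraNneq t0 => k0; rewrite -(vconj_eq0 hq) -/(vconj q t) et k0 scale0r //.
have ej : cnj q (co t j) = k * co t j by rewrite -co_vconj et coZ.
exists ((co t j)^-1 *: t); split.
  apply/FvecP; rewrite /vconj vconjZ -/(vconj q t) et scalerA cnjV ej.
  by rewrite invfM mulrAC mulVf // mul1r.
split; first by rewrite scaler_eq0 negb_or invr_eq0 tj.
by exists (co t j); split => //; rewrite scalerA mulfV // scale1r.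
Qed.

Section Main.
Variables (K : finFieldType) (q : nat) (tau : K) (M : 'M[K]_3) (c : 'rV[K]_6).
Hypotheses (hq : #|K| = (q ^ 2)%N) (htau : (q ^ 2 - 1)%N.-primitive_root tau)
  (hM : M \in unitmx) (hc : Fconic q c).

Definition colv := row3 (M (inord 0) (inord 2)) (M (inord 1) (inord 2)) (M (inord 2) (inord 2)).
Lemma co_colv x : co (x *m M) 2 = co x 0 * co colv 0 + co x 1 * co colv 1 + co x 2 * co colv 2.
Proof. by rewrite co_mul3 /colv !co_row3. Qed.

Lemma colv_nz : colv != 0.
Proof.
apply/negP => /eqP h0.
have e : (row3 0 0 1 *m invmx M) *m M = row3 0 0 1 by rewrite mulmxKV.
have := congr1 (fun v => co v 2) e; rewrite co_colv h0 !co0 co_row3 //=.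
by move/eqP; rewrite !mulr0 !addr0 eq_sym oner_eq0.
Qed.

Lemma coF (x : 'rV[K]_3) k : Fvec q x -> inF q (co x k).
Proof. by move=> h; apply: h. Qed.

Lemma exists_lam : secant q M ->
  exists (lam : K) (m : 'rV[K]_3), lam != 0 /\ Fvec q m /\ colv = lam *: m.
Proof.
case=> X [Y [[x [Fx [x0 eX]]] [[y [Fy [y0 eY]]] [lX [lY nXY]]]]].
have dx : co x 0 * co colv 0 + co x 1 * co colv 1 + co x 2 * co colv 2 = 0.
  rewrite -co_colv; case: eX => k [k0 eX]; move: lX; rewrite /linf eX coZ.
  by move/eqP; rewrite mulf_eq0 (negbTE k0) => /eqP.
have dy : co y 0 * co colv 0 + co y 1 * co colv 1 + co y 2 * co colv 2 = 0.
  rewrite -co_colv; case: eY => k [k0 eY]; move: lY; rewrite /linf eY coZ.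
  by move/eqP; rewrite mulf_eq0 (negbTE k0) => /eqP.
set z := row3 (co x 1 * co y 2 - co x 2 * co y 1) (co x 2 * co y 0 - co x 0 * co y 2)
              (co x 0 * co y 1 - co x 1 * co y 0).
have Fz : Fvec q z.
  move=> i; rewrite (ord_inord i) -/(co z i) co_row3 ?ltn_ord //.
  by case: i => [[|[|[|]]] hi] //=; rewrite inFB // inFM // coF.
have z0 : z != 0.
  apply/negP => /eqP z0.
  have zc k : (k < 3)%N -> co z k = 0 by move=> hk; rewrite z0 co0.
  have [k ek] : exists k, x = k *: y.
    apply: prop3 => //.
    - by apply/eqP; rewrite -subr_eq0; have := zc 0%N isT; rewrite /z co_row3 //= => /eqP.
    - by apply/eqP; rewrite -subr_eq0; have := zc 1%N isT; rewrite /z co_row3 //= => /eqP.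
    - by apply/eqP; rewrite -subr_eq0; have := zc 2%N isT; rewrite /z co_row3 //= => /eqP.
  have k0 : k != 0 by apply: contraNneq x0 => k0; rewrite ek k0 scale0r.
  apply: nXY; apply: peq_trans eX _; rewrite ek -scalemxAl.
  by apply: peqZ2 => //; apply: peq_sym.
have vnz := colv_nz; move: dx dy vnz; generalize colv => v dx dy vnz.
have [lam el] : exists k, v = k *: z.
  apply: prop3 => //; rewrite !co_row3 //=.
  - apply/eqP; rewrite -subr_eq0; apply/eqP.
    have -> : co v 1 * (co x 0 * co y 1 - co x 1 * co y 0) -
      co v 2 * (co x 2 * co y 0 - co x 0 * co y 2) =
      co x 0 * (co y 0 * co v 0 + co y 1 * co v 1 + co y 2 * co v 2)
      - co y 0 * (co x 0 * co v 0 + co x 1 * co v 1 + co x 2 * co v 2) by ring.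
    by rewrite dx dy; ring.
  - apply/eqP; rewrite -subr_eq0; apply/eqP.
    have -> : co v 2 * (co x 1 * co y 2 - co x 2 * co y 1) -
      co v 0 * (co x 0 * co y 1 - co x 1 * co y 0) =
      co x 1 * (co y 0 * co v 0 + co y 1 * co v 1 + co y 2 * co v 2)
      - co y 1 * (co x 0 * co v 0 + co x 1 * co v 1 + co x 2 * co v 2) by ring.
    by rewrite dx dy; ring.
  - apply/eqP; rewrite -subr_eq0; apply/eqP.
    have -> : co v 0 * (co x 2 * co y 0 - co x 0 * co y 2) -
      co v 1 * (co x 1 * co y 2 - co x 2 * co y 1) =
      co x 2 * (co y 0 * co v 0 + co y 1 * co v 1 + co y 2 * co v 2)
      - co y 2 * (co x 0 * co v 0 + co x 1 * co v 1 + co x 2 * co v 2) by ring.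
    by rewrite dx dy; ring.
exists lam, z; split; last by split.
by apply: contraNneq vnz => l0; rewrite el l0 scale0r.
Qed.

Variables (lam : K) (m : 'rV[K]_3).
Hypotheses (hlam : lam != 0) (hm : Fvec q m) (hcol : colv = lam *: m).

Definition M' := lam^-1 *: M.
Lemma M'unit : M' \in unitmx.
Proof. by rewrite unitmxZ // unitfE invr_eq0. Qed.
Lemma M'col k : (k < 3)%N -> M' (inord k) (inord 2) = co m k.
Proof.
move=> hk; rewrite mxE.
have : co colv k = co (lam *: m) k by rewrite hcol.
rewrite coZ /colv co_row3 // => e.
have -> : M (inord k) (inord 2) = lam * co m k.
  by rewrite -e; case: k hk {e} => [|[|[|]]].
by rewrite mulrA mulVf // mul1r.
Qed.

Definition N : 'M[K]_(3,5) := \matrix_(i < 3, j < 5)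
  nth 0 [:: d0 q tau (M' i (inord 0)); d1 q tau (M' i (inord 0));
            d0 q tau (M' i (inord 1)); d1 q tau (M' i (inord 1)); M' i (inord 2)] j.

Lemma mF k : inF q (co m k).
Proof. exact: hm. Qed.

Lemma NF i j : inF q (N i j).
Proof.
rewrite mxE; case: j => [[|[|[|[|[|]]]]] hj] //=;
  rewrite ?(d0_inF hq htau) ?(d1_inF hq) //.
have e := M'col (ltn_ord i); rewrite -(ord_inord i) in e.
rewrite e; exact: mF.
Qed.

Lemma NE : N *m Emat tau = M'.
Proof.
apply/matrixP => i j; rewrite mxE !big_ord_recr big_ord0 /= add0r !mxE /=.
case: j => [[|[|[|]]] hj] //=.
- by rewrite !mulr0 !addr0 mulr1 d01E (ord_inord (Ordinal hj)).
- by rewrite !mulr0 !add0r mulr1 addr0 d01E (ord_inord (Ordinal hj)).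
- by rewrite !mulr0 !add0r mulr1 (ord_inord (Ordinal hj)).
Qed.

Lemma NEq : N *m Emat (tq q tau) = map_mx (cnj q) M'.
Proof.
apply/matrixP => i j; rewrite mxE !big_ord_recr big_ord0 /= add0r !mxE /=.
case: j => [[|[|[|]]] hj] //=.
- by rewrite !mulr0 !addr0 mulr1 (d01qE hq htau) (ord_inord (Ordinal hj)).
- by rewrite !mulr0 !add0r mulr1 addr0 (d01qE hq htau) (ord_inord (Ordinal hj)).
- rewrite !mulr0 !add0r mulr1 (ord_inord (Ordinal hj)) /=.
  have e := M'col (ltn_ord i); rewrite -(ord_inord i) in e.
  have e2 : lam^-1 * M i (inord 2) = co m i by rewrite -e mxE.
  by rewrite e2 (inF_cnj (mF _)).
Qed.

Lemma N_free : row_free N.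
Proof.
apply/row_freeP; exists (Emat tau *m invmx M').
by rewrite mulmxA NE mulmxV // M'unit.
Qed.

Lemma NconjE : map_mx (cnj q) N = N.
Proof. by apply: Fmx_conj => i j; exact: NF. Qed.


Lemma uNE (u : 'rV[K]_3) : (u *m N) *m Emat tau = u *m M'.
Proof. by rewrite -mulmxA NE. Qed.
Lemma uNEq (u : 'rV[K]_3) : (u *m N) *m Emat (tq q tau) = u *m map_mx (cnj q) M'.
Proof. by rewrite -mulmxA NEq. Qed.
Lemma co_uN4 (u : 'rV[K]_3) : co (u *m N) 4 = co (u *m M') 2.
Proof. by rewrite -uNE mulE co_row3. Qed.
Lemma co_uN01 (u : 'rV[K]_3) : co (u *m N) 0 + co (u *m N) 1 * tau = co (u *m M') 0.
Proof. by rewrite -uNE mulE co_row3. Qed.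
Lemma co_uN23 (u : 'rV[K]_3) : co (u *m N) 2 + co (u *m N) 3 * tau = co (u *m M') 1.
Proof. by rewrite -uNE mulE co_row3. Qed.
Lemma uN_inj (u v : 'rV[K]_3) : u *m N = v *m N -> u = v.
Proof. exact: (row_free_inj N_free). Qed.
Lemma uM'_inj (u v : 'rV[K]_3) : u *m M' = v *m M' -> u = v.
Proof. by move=> e; rewrite -(mulmxK M'unit u) e mulmxK // M'unit. Qed.
Lemma uN0 (u : 'rV[K]_3) : (u *m N == 0) = (u == 0).
Proof.
apply/eqP/eqP => [h|->]; last by rewrite mul0mx.
by apply: uN_inj; rewrite h mul0mx.
Qed.
Lemma uM'0 (u : 'rV[K]_3) : (u *m M' == 0) = (u == 0).
Proof.
apply/eqP/eqP => [h|->]; last by rewrite mul0mx.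
by apply: uM'_inj; rewrite h mul0mx.
Qed.
Lemma N_Fvec (u : 'rV[K]_3) : Fvec q u -> Fvec q (u *m N).
Proof.
move/FvecP => h; apply/FvecP.
by rewrite /vconj vconjM // NconjE; congr (_ *m _).
Qed.
Lemma N_Fpre (u : 'rV[K]_3) : Fvec q (u *m N) -> Fvec q u.
Proof.
move/FvecP => h; apply/FvecP; apply: uN_inj.
by rewrite -h /vconj vconjM // NconjE.
Qed.
Lemma MM' (u : 'rV[K]_3) : u *m M = lam *: (u *m M').
Proof. by rewrite /M' -scalemxAr scalerA mulfV // scale1r. Qed.
Lemma fplusM' (u : 'rV[K]_3) : fplus M c (u *m M') = lam^-1 ^+ 2 * qf c u.
Proof. by rewrite /fplus /M' -scalemxAr -scalemxAl mulmxK // qfZ. Qed.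
Lemma fplusM (u : 'rV[K]_3) : fplus M c (u *m M) = qf c u.
Proof. by rewrite /fplus mulmxK. Qed.
Lemma fplusZ (X : 'rV[K]_3) k : fplus M c (k *: X) = k ^+ 2 * fplus M c X.
Proof. by rewrite /fplus -scalemxAl qfZ. Qed.
Lemma co2_conj (u : 'rV[K]_3) : co (vconj q u *m M') 2 = cnj q (co (u *m M') 2).
Proof.
rewrite !co_mul3 !co_vconj !cnjD // !cnjM.
have e k : (k < 3)%N -> cnj q (M' (inord k) (inord 2)) = M' (inord k) (inord 2).
  by move=> hk; rewrite M'col // (inF_cnj (mF _)).
by rewrite !e.
Qed.
Lemma m_nz : m != 0.
Proof. by apply: contraNneq colv_nz => m0; rewrite hcol m0 scaler0. Qed.


Lemma divZ (k a b : K) : k != 0 -> (k * a) / (k * b) = a / b.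
Proof. by move=> k0; rewrite invfM mulrACA mulfV // mul1r. Qed.
Lemma bbvZ X k : k != 0 -> bbv q tau (k *: X) = bbv q tau X.
Proof. by move=> k0; rewrite /bbv !coZ !divZ. Qed.

Lemma bbvN (x : 'rV[K]_3) : Fvec q x -> co (x *m M') 2 != 0 ->
  bbv q tau (x *m M) = (co (x *m M') 2)^-1 *: (x *m N).
Proof.
move=> Fx s0; rewrite MM' bbvZ //.
have Fw := N_Fvec Fx; set w := x *m N in Fw *.
have cw k : inF q (co w k) by exact: Fw.
have e4 := co_uN4 x; have e01 := co_uN01 x; have e23 := co_uN23 x.
rewrite -/w in e4 e01 e23.
set s := co (x *m M') 2 in s0 e4 *.
have hs : inF q (s^-1) by rewrite inFV // -e4.
have h01 : co (x *m M') 0 / s = co w 0 / s + co w 1 / s * tau.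
  by rewrite -e01 mulrDl mulrAC.
have h23 : co (x *m M') 1 / s = co w 2 / s + co w 3 / s * tau.
  by rewrite -e23 mulrDl mulrAC.
rewrite /bbv h01 h23 !(d0_uniq hq htau) ?(d1_uniq hq htau) ?inFM //.
apply: rv_eq => k hk; rewrite coZ co_row5 //.
case: k hk => [|[|[|[|[|]]]]] //= _; rewrite ?e4 ?mulVf //; by rewrite mulrC.
Qed.

Lemma s_ne0 (x : 'rV[K]_3) : (co (x *m M) 2 != 0) = (co (x *m M') 2 != 0).
Proof. by rewrite MM' coZ mulf_eq0 (negbTE hlam). Qed.

Lemma BB_le : (BBspace q tau M <= N)%MS.
Proof.
apply/sumsmx_subP => x /andP [/forallP hx hs]; rewrite genmxE.
have Fx : Fvec q x by [].
rewrite s_ne0 in hs; rewrite bbvN //.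
by apply: scalemx_sub; exact: submxMl.
Qed.

Lemma xN_le_BB (x : 'rV[K]_3) : Fvec q x -> (x *m N <= BBspace q tau M)%MS.
Proof.
have key y : Fvec q y -> co (y *m M') 2 != 0 -> (y *m N <= BBspace q tau M)%MS.
  move=> Fy sy.
  have -> : y *m N = co (y *m M') 2 *: bbv q tau (y *m M).
    by rewrite bbvN // scalerA mulfV // scale1r.
  apply: scalemx_sub.
  apply: (sumsmx_sup y); first by rewrite s_ne0 sy andbT; apply/forallP.
  by rewrite genmxE.
move=> Fx; case: (boolP (co (x *m M') 2 == 0)) => [/eqP s0|]; last exact: key.
have [j [hj mj]] := nz_co m_nz.
set e := delta_mx 0 (inord j) : 'rV[K]_3.
have Fe : Fvec q e by move=> i; rewrite mxE inFn.
have se : co (e *m M') 2 = co m j.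
  by rewrite -rowE /co mxE M'col.
have -> : x *m N = (x + e) *m N + (-1) *: (e *m N).
  by rewrite mulmxDl scaleN1r addrK.
apply: addmx_sub.
  apply: key; first by move=> i; rewrite mxE inFD.
  by rewrite mulmxDl coD s0 add0r se.
apply: scalemx_sub; apply: key => //; by rewrite se.
Qed.

Lemma inBB_iff p : inBB q tau M p <-> exists w, Fvec q w /\ w != 0 /\ peq p (w *m N).
Proof.
split.
  case=> [[w' [Fw' [w'0 pe]]] hle].
  have := submx_trans hle BB_le => /submxP [D eD].
  case: pe => k [k0 pk].
  have ew : w' = (k^-1 *: D) *m N by rewrite -scalemxAl -eD pk scalerA mulVf // scale1r.
  exists (k^-1 *: D); split; first by apply: N_Fpre; rewrite -ew.
  split; last by rewrite -ew pk; exact: peqZ.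
  by apply: contraNneq w'0 => h; rewrite ew h mul0mx.
case=> w [Fw [w0 pe]]; split.
  exists (w *m N); split; first exact: N_Fvec.
  by rewrite uN0.
case: pe => k [k0 ->]; apply: scalemx_sub; exact: xN_le_BB.
Qed.

Lemma wE_spread (w : 'rV[K]_5) (T : 'rV[K]_3) e : linf T -> co w 4 = 0 ->
  co w 0 + co w 1 * tau = e * co T 0 -> co w 2 + co w 3 * tau = e * co T 1 ->
  w *m Emat tau = e *: T.
Proof.
move=> lT w4 e1 e2; rewrite mulE; apply: rv_eq => k hk; rewrite co_row3 // coZ.
by case: k hk => [|[|[|]]] //= _; rewrite w4 lT mulr0.
Qed.

Lemma spread_iff T p : linf T -> (inSpread q tau T p /\ inBB q tau M p) <->
  exists w, Fvec q w /\ w != 0 /\ peq p (w *m N) /\ exists e, w *m M' = e *: T.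
Proof.
move=> lT; split.
  case=> [[w1 [Fw1 [w10 [pw1 [w14 [e [e1 e2]]]]]]] /inBB_iff [w [Fw [w0 pw]]]].
  exists w; do 3!split => //.
  have [k [k0 ek]] := peq_trans (peq_sym pw1) pw.
  exists (k^-1 * e); rewrite -uNE.
  have -> : w *m N = k^-1 *: w1 by rewrite ek scalerA mulVf // scale1r.
  by rewrite -scalemxAl (wE_spread lT w14 e1 e2) scalerA.
case=> w [Fw [w0 [pw [e ew]]]]; split; last by apply/inBB_iff; exists w.
exists (w *m N); split; first exact: N_Fvec.
split; first by rewrite uN0.
split => //; split; first by rewrite co_uN4 ew coZ lT mulr0.
by exists e; rewrite co_uN01 co_uN23 ew !coZ.
Qed.

Lemma point_iff T t p : linf T -> Fvec q t -> t != 0 -> peq T (t *m M) ->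
  (inSpread q tau T p /\ inBB q tau M p) <-> (p != 0 /\ peq p (t *m N)).
Proof.
move=> lT Ft t0 [k [k0 eT]]; rewrite (spread_iff p lT); split.
  case=> w [Fw [w0 [pw [e ew]]]].
  have ewt : w = (e * k * lam) *: t.
    by apply: uM'_inj; rewrite ew eT MM' -scalemxAl !scalerA.
  have mu0 : e * k * lam != 0 by apply: contraNneq w0 => h; rewrite ewt h scale0r.
  split; first by rewrite (peq_nz pw) uN0.
  by apply: peq_trans pw _; rewrite ewt -scalemxAl; exact: peqZ.
case=> p0 pt; exists t; do 3!split => //.
exists (k * lam)^-1; rewrite eT MM' !scalerA -mulrA mulVf ?scale1r //.
by rewrite mulf_neq0.
Qed.

Lemma inCC_iff p : inCC q tau M c p <-> inConic4 q N c p.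
Proof.
split.
  case=> [[X [[x [Fx [x0 [qx pX]]]] [X2 pb]]] | [T [[t [Ft [t0 [qt pT]]]] [lT sT]]]].
    have [k [k0 eX]] := pX.
    have s0 : co (x *m M') 2 != 0.
      by rewrite -s_ne0; apply: contraNneq X2 => h; rewrite eX coZ h mulr0.
    exists x; do 3!split => //.
    apply: peq_trans pb _; rewrite eX bbvZ // bbvN //; apply: peqZ.
    by rewrite invr_eq0.
  have [_ pt] := (point_iff p lT Ft t0 pT).1 sT.
  by exists t.
case=> x [Fx [x0 [qx px]]].
case: (boolP (co (x *m M') 2 == 0)) => [/eqP s0|s0].
  right; exists (x *m M); split; first by exists x; do 3!split => //; exact: peq_refl.
  have lT : linf (x *m M) by rewrite /linf MM' coZ s0 mulr0.
  split => //; apply/(point_iff p lT Fx x0 (peq_refl _)); split => //.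
  by rewrite (peq_nz px) uN0.
left; exists (x *m M); split; first by exists x; do 3!split => //; exact: peq_refl.
split; first by rewrite s_ne0.
rewrite bbvN //; apply: peq_trans px (peq_sym _); apply: peqZ.
by rewrite invr_eq0.
Qed.

Lemma conjpt (X : 'rV[K]_3) : X != 0 -> linf X -> inCplus M c X ->
  let t := X *m invmx M' in
  t *m M' = X /\ vconj q t *m M' != 0 /\ linf (vconj q t *m M') /\ inCplus M c (vconj q t *m M').
Proof.
move=> X0 lX [_ fX] t.
have eX : t *m M' = X by rewrite /t mulmxKV // M'unit.
have t0 : t != 0 by rewrite -uM'0 eX.
have qt : qf c t = 0.
  by move: fX; rewrite -eX fplusM' => /eqP; rewrite mulf_eq0 expf_eq0 invr_eq0 (negbTE hlam) /= => /eqP.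
have nz : vconj q t *m M' != 0 by rewrite uM'0 /vconj vconj_eq0.
split => //; split => //; split.
  by rewrite /linf co2_conj eX lX /cnj expr0n; have := q_gt1 hq; case: (q).
split => //; rewrite fplusM' qf_conj ?qt ?cnj0 ?mulr0 //; by case: hc.
Qed.

Lemma inB_of (X : 'rV[K]_3) : X != 0 -> linf X -> inCplus M c X ->
  peq (vconj q (X *m invmx M') *m M') X -> inB q M X.
Proof.
move=> X0 lX hX; have [eX [nz _]] := conjpt X0 lX hX.
set t := X *m invmx M' in eX nz *.
case=> k [k0 ek].
have t0 : t != 0 by rewrite -uM'0 eX.
have : vconj q t = k *: t by apply: uM'_inj; rewrite ek -scalemxAl eX.
case/(L7 hq t0) => w [Fw [w0 [mu [mu0 etw]]]].
exists w; do 2!split => //.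
exists (mu * lam^-1); split; first by rewrite mulf_neq0 // invr_eq0.
by rewrite -eX etw -scalemxAl MM' scalerA divfK.
Qed.

Lemma inC_of (X : 'rV[K]_3) : inB q M X -> inCplus M c X -> inC q M c X /\ exists w, Fvec q w /\ w != 0 /\ qf c w = 0 /\ peq X (w *m M).
Proof.
case=> w [Fw [w0 pX]] [_ fX].
have qw : qf c w = 0.
  move: fX; case: pX => k [k0 ->]; rewrite fplusZ fplusM => /eqP.
  by rewrite mulf_eq0 expf_eq0 (negbTE k0) /= => /eqP.
by split; exists w.
Qed.

Lemma inC_Cplus (T : 'rV[K]_3) : inC q M c T -> inCplus M c T.
Proof.
case=> t [Ft [t0 [qt [k [k0 eT]]]]]; split.
  by rewrite eT scaler_eq0 negb_or k0 /= MM' scaler_eq0 negb_or hlam uM'0.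
by rewrite eT fplusZ fplusM qt mulr0.
Qed.

Lemma inSpread_peq T T' p : peq T T' -> inSpread q tau T p -> inSpread q tau T' p.
Proof.
case=> k [k0 ->] [w [Fw [w0 [pw [w4 [e [e1 e2]]]]]]].
exists w; do 4!split => //; exists (e * k).
by rewrite e1 e2 !coZ !mulrA.
Qed.

Lemma CCinf p : (inCC q tau M c p /\ sinf p) <->
  exists T, inC q M c T /\ linf T /\ inSpread q tau T p /\ inBB q tau M p.
Proof.
split.
  case=> [[[X [_ [_ [k [k0 eb]]]]] | //]].
  by rewrite /sinf eb coZ /bbv co_row5 //= mulr1 => /eqP; rewrite (negbTE k0).
case=> T [CT [lT [sT bT]]]; split; first by right; exists T.
case: sT => w [_ [_ [[k [k0 ->]] [w4 _]]]].
by rewrite /sinf coZ w4 mulr0.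
Qed.

Lemma gptE1 T : linf T -> gpt q tau T *m Emat tau = (tau - tq q tau) *: T.
Proof.
move=> lT; rewrite mulE; apply: rv_eq => k hk; rewrite coZ co_row3 // /gpt !co_row5 //.
case: k hk => [|[|[|]]] //= _; rewrite ?lT /tq; ring.
Qed.
Lemma gptE2 T : gpt q tau T *m Emat (tq q tau) = 0.
Proof.
rewrite mulE; apply: rv_eq => k hk; rewrite co0 co_row3 // /gpt !co_row5 //.
case: k hk => [|[|[|]]] //= _; rewrite /tq; ring.
Qed.
Lemma vgptE1 T : vconj q (gpt q tau T) *m Emat tau = 0.
Proof.
rewrite mulE; apply: rv_eq => k hk; rewrite co0 co_row3 // !co_vconj /gpt !co_row5 //.
case: k hk => [|[|[|]]] //= _; rewrite ?cnj0 // cnjM cnjN // -/(tq q tau) /tq (cnjK hq); ring.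
Qed.
Lemma vgptE2 T : linf T -> vconj q (gpt q tau T) *m Emat (tq q tau) = (tq q tau - tau) *: vconj q T.
Proof.
move=> lT; rewrite mulE; apply: rv_eq => k hk; rewrite coZ co_row3 // !co_vconj /gpt !co_row5 //.
case: k hk => [|[|[|]]] //= _; rewrite ?cnj0 ?lT ?cnj0 ?mulr0 // cnjM cnjN // /tq (cnjK hq); ring.
Qed.
Lemma gpt4 T : co (gpt q tau T) 4 = 0.
Proof. by rewrite /gpt co_row5. Qed.
Lemma vgpt4 T : co (vconj q (gpt q tau T)) 4 = 0.
Proof. by rewrite co_vconj gpt4 cnj0. Qed.

Lemma det5 (u v : 'rV[K]_5) : co u 4 = co v 4 -> u *m Emat tau = v *m Emat tau ->
  u *m Emat (tq q tau) = v *m Emat (tq q tau) -> u = v.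
Proof.
move=> e4 e1 e2.
have f k : (k < 2)%N -> co u (k.*2) + co u (k.*2).+1 * tau = co v (k.*2) + co v (k.*2).+1 * tau /\
    co u (k.*2) + co u (k.*2).+1 * tq q tau = co v (k.*2) + co v (k.*2).+1 * tq q tau.
  move=> hk; have := congr1 (fun w => co w k) e1; have := congr1 (fun w => co w k) e2.
  by case: k hk => [|[|]] // _; rewrite !mulE !co_row3.
have g k : (k < 2)%N -> co u (k.*2) = co v (k.*2) /\ co u (k.*2).+1 = co v (k.*2).+1.
  move=> hk; have [h1 h2] := f k hk.
  have d1 : (co u (k.*2).+1 - co v (k.*2).+1) * (tau - tq q tau) = 0.
    have -> : (co u (k.*2).+1 - co v (k.*2).+1) * (tau - tq q tau) =
      (co u (k.*2) + co u (k.*2).+1 * tau) - (co u (k.*2) + co u (k.*2).+1 * tq q tau)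
      - ((co v (k.*2) + co v (k.*2).+1 * tau) - (co v (k.*2) + co v (k.*2).+1 * tq q tau)) by ring.
    by rewrite h1 h2 subrr.
  move/eqP: d1; rewrite mulf_eq0 (negbTE (dtau_neq0 hq htau)) orbF subr_eq0 => /eqP e.
  by split => //; move: h1; rewrite e => /addIr.
apply: rv_eq => k hk; case: k hk => [|[|[|[|[|]]]]] // _.
- exact: (g 0%N isT).1.
- exact: (g 0%N isT).2.
- exact: (g 1%N isT).1.
- exact: (g 1%N isT).2.
Qed.

Lemma onLine_swap (U V X : 'rV[K]_5) : onLine U V X -> onLine V U X.
Proof.
case=> X0 [a [b eX]]; split => //.
by exists b; exists a; rewrite addrC.
Qed.
Lemma meets1_swap (U V : 'rV[K]_5) : meets1 N c U V -> meets1 N c V U.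
Proof.
case=> X [cX [lX h]]; exists X; split => //; split; first exact: onLine_swap.
by move=> Y cY lY; apply: h => //; exact: onLine_swap.
Qed.

Lemma special_half (P Q : 'rV[K]_3) : P != 0 -> linf P -> inCplus M c P -> ~ inB q M P ->
  linf Q -> (forall X, X != 0 -> linf X -> inCplus M c X -> peq X P \/ peq X Q) ->
  meets1 N c (gpt q tau P) (vconj q (gpt q tau Q)).
Proof.
move=> P0 lP CP nBP lQ hX.
have [eP [nz [lX' CX']]] := conjpt P0 lP CP.
have [hP'|hQ'] := hX _ nz lX' CX'.
  by case: nBP; apply: inB_of.
move: eP nz lX' CX' hQ'; set t := P *m invmx M' => eP nz lX' CX' hQ'.
case: hQ' => k [k0 ek].
have t0 : t != 0 by rewrite -uM'0 eP.
have qt : qf c t = 0.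
  case: CP => _; rewrite -eP fplusM' => /eqP.
  by rewrite mulf_eq0 expf_eq0 invr_eq0 (negbTE hlam) /= => /eqP.
have dq : tq q tau - tau != 0 by rewrite subr_eq0 (tau_nF hq htau).
have tcE : t *m map_mx (cnj q) M' = cnj q k *: vconj q Q.
  rewrite -[t](vconjK hq) -(vconjM hq) -/(vconj q t) ek /vconj vconjZ //.
exists (t *m N); split.
  by exists t; do 2!split => //; exact: peq_refl.
split.
  split; first by rewrite uN0.
  exists (tau - tq q tau)^-1, (cnj q k / (tq q tau - tau)).
  apply: det5.
  - by rewrite co_uN4 eP lP coD !coZ gpt4 vgpt4 !mulr0 addr0.
  - rewrite uNE eP mulmxDl -!scalemxAl gptE1 // vgptE1 scaler0 addr0 scalerA mulVf ?scale1r //.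
    exact: (dtau_neq0 hq htau).
  - by rewrite uNEq mulmxDl -!scalemxAl gptE2 vgptE2 // scaler0 add0r scalerA divfK // tcE.
move=> Y [y [y0 [qy pY]]] [Y0 [a [b eY]]].
case: pY => k' [k'0 eY'].
have e1 : y *m M' = (k'^-1 * a * (tau - tq q tau)) *: (t *m M').
  have -> : y *m M' = k'^-1 *: (Y *m Emat tau).
    by rewrite eY' -scalemxAl uNE scalerA mulVf // scale1r.
  by rewrite eY mulmxDl -!scalemxAl gptE1 // vgptE1 scaler0 addr0 eP !scalerA !mulrA.
have eyt : y = (k'^-1 * a * (tau - tq q tau)) *: t.
  by apply: uM'_inj; rewrite e1 scalemxAl.
have mu0 : k'^-1 * a * (tau - tq q tau) != 0.
  by apply: contraNneq y0 => h; rewrite eyt h scale0r.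
rewrite eY' eyt -scalemxAl scalerA; apply: peqZ.
by rewrite mulf_neq0.
Qed.

Lemma inOO_part (P Q : 'rV[K]_3) : P != 0 -> Q != 0 -> linf P -> linf Q ->
  (forall X : 'rV[K]_3, X != 0 -> linf X -> (inCplus M c X <-> peq X P \/ peq X Q)) ->
  forall p, (inOO q tau M c p /\ sinf p) <-> (inSpread q tau P p \/ inSpread q tau Q p).
Proof.
move=> P0 Q0 lP lQ hPQ p; split.
  case=> [[w [Fw [w0 [[k [k0 pw]] fw]]]] sp].
  have w4 : co w 4 = 0.
    by move: sp; rewrite /sinf pw coZ => /eqP; rewrite mulf_eq0 (negbTE k0) => /eqP.
  set X := row3 (co w 0 + co w 1 * tau) (co w 2 + co w 3 * tau) (co w 4) in fw.
  have cw j : inF q (co w j) by exact: Fw.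
  have X0 : X != 0.
    apply: contraNneq w0 => X0.
    have h0 := congr1 (fun v => co v 0) X0; have h1 := congr1 (fun v => co v 1) X0.
    rewrite /= /X co_row3 //= co0 in h0.
    rewrite /= /X co_row3 //= co0 in h1.
    have [e0 e1] := F_indep hq htau (cw 0%N) (cw 1%N) h0.
    have [e2 e3] := F_indep hq htau (cw 2%N) (cw 3%N) h1.
    apply/eqP; apply: rv_eq => j hj; rewrite co0.
    by case: j hj => [|[|[|[|[|]]]]].
  have lX : linf X by rewrite /linf /X co_row3.
  have ew : forall T e, X = e *: T -> inSpread q tau T p.
    move=> T e eX; exists w; split => //; split => //; split; first by exists k.
    split => //.
    exists e; have := congr1 (fun v => co v 0) eX; have := congr1 (fun v => co v 1) eX.
    by rewrite /= /X !co_row3 //= !coZ => -> ->.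
  case: ((hPQ X X0 lX).1 (conj X0 fw)) => [[e [_ eX]]|[e [_ eX]]].
    by left; apply: ew eX.
  by right; apply: ew eX.
have side T : T != 0 -> linf T -> (peq T P \/ peq T Q) -> inSpread q tau T p -> inOO q tau M c p /\ sinf p.
  move=> T0 lT hT [w [Fw [w0 [[k [k0 pw]] [w4 [e [e1 e2]]]]]]].
  have [_ fT] := (hPQ T T0 lT).2 hT.
  split; last by rewrite /sinf pw coZ w4 mulr0.
  exists w; do 2!split => //; split; first by exists k.
  have -> : row3 (co w 0 + co w 1 * tau) (co w 2 + co w 3 * tau) (co w 4) = e *: T.
    by rewrite -mulE (wE_spread lT w4 e1 e2).
  by rewrite fplusZ fT mulr0.
case=> [h|h].
  by apply: (side P P0 lP) => //; left; exact: peq_refl.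
by apply: (side Q Q0 lQ) => //; right; exact: peq_refl.
Qed.

Lemma main_result (P Q : 'rV[K]_3) :
  P != 0 -> Q != 0 -> linf P -> linf Q ->
  (forall X : 'rV[K]_3, X != 0 -> linf X -> (inCplus M c X <-> peq X P \/ peq X Q)) ->
  (exists (N : 'M[K]_(3,5)) (c' : 'rV[K]_6),
      Fconic4 q N c'
      /\ (forall p, inCC q tau M c p <-> inConic4 q N c' p)
      /\ (forall x : 'rV[K]_3, Fvec q x -> x != 0 -> inBB q tau M (x *m N))
      /\ (~ peq P Q -> ~ inB q M P -> ~ inB q M Q ->
            special q N c' (gpt q tau P) (gpt q tau Q)))
  /\ (forall p, (inOO q tau M c p /\ sinf p) <-> (inSpread q tau P p \/ inSpread q tau Q p))
  /\ (peq P Q ->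
        inB q M P /\
        exists p0 : 'rV[K]_5,
          (forall p, (inSpread q tau P p /\ inBB q tau M p) <-> (p != 0 /\ peq p p0))
          /\ (forall p, (inCC q tau M c p /\ sinf p) <-> (p != 0 /\ peq p p0)))
  /\ (~ peq P Q -> inB q M P -> inB q M Q ->
        exists p1 p2 : 'rV[K]_5, ~ peq p1 p2
          /\ (forall p, (inSpread q tau P p /\ inBB q tau M p) <-> (p != 0 /\ peq p p1))
          /\ (forall p, (inSpread q tau Q p /\ inBB q tau M p) <-> (p != 0 /\ peq p p2))
          /\ (forall p, (inCC q tau M c p /\ sinf p) <->
                        (p != 0 /\ (peq p p1 \/ peq p p2)))).
Proof.
move=> P0 Q0 lP lQ hPQ.
have CP : inCplus M c P by apply/(hPQ P P0 lP); left; exact: peq_refl.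
have CQ : inCplus M c Q by apply/(hPQ Q Q0 lQ); right; exact: peq_refl.
have hX : forall X, X != 0 -> linf X -> inCplus M c X -> peq X P \/ peq X Q.
  by move=> X X0 lX CX; apply/(hPQ X X0 lX).
have hX' : forall X, X != 0 -> linf X -> inCplus M c X -> peq X Q \/ peq X P.
  by move=> X X0 lX CX; case: (hX X X0 lX CX); [right|left].
have Tpt : forall T, inC q M c T -> linf T -> peq T P \/ peq T Q.
  by move=> T CT lT; have [T0 _] := inC_Cplus CT; apply: hX => //; exact: inC_Cplus.
split.
  exists N, c; split; first by split; [exact: NF | split; [exact: N_free | exact: hc]].
  split; first exact: inCC_iff.
  split; first by move=> x Fx x0; apply/inBB_iff; exists x; do 2!split => //; exact: peq_refl.
  move=> nPQ nBP nBQ; split; first exact: special_half.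
  by apply: meets1_swap; apply: special_half.
split; first exact: inOO_part.
split.
  move=> ePQ.
  have BP : inB q M P.
    have [_ [nz [lX' CX']]] := conjpt P0 lP CP.
    apply: inB_of => //.
    case: (hX _ nz lX' CX') => // h; apply: peq_trans h (peq_sym ePQ).
  split => //.
  have [CPc [w [Fw [w0 [qw pP]]]]] := inC_of BP CP.
  exists (w *m N); split; first by move=> p; exact: point_iff.
  move=> p; rewrite CCinf; split.
    case=> T [CT [lT [sT bT]]].
    have TP : peq T P by case: (Tpt T CT lT) => // h; apply: peq_trans h (peq_sym ePQ).
    by apply/(point_iff p lP Fw w0 pP); split => //; apply: inSpread_peq sT.
  move=> h; exists P; split => //; split => //.
  by apply/(point_iff p lP Fw w0 pP).
move=> nPQ BP BQ.
have [CPc [w1 [Fw1 [w10 [qw1 pP]]]]] := inC_of BP CP.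
have [CQc [w2 [Fw2 [w20 [qw2 pQ]]]]] := inC_of BQ CQ.
exists (w1 *m N), (w2 *m N); split.
  case=> k [k0 ek]; apply: nPQ.
  have e : w1 = k *: w2 by apply: uN_inj; rewrite ek scalemxAl.
  apply: peq_trans pP _; apply: peq_trans _ (peq_sym pQ).
  by rewrite e -scalemxAl; exact: peqZ.
split; first by move=> p; exact: point_iff.
split; first by move=> p; exact: point_iff.
move=> p; rewrite CCinf; split.
  case=> T [CT [lT [sT bT]]].
  case: (Tpt T CT lT) => h.
    have [p0 pp] := (point_iff p lP Fw1 w10 pP).1 (conj (inSpread_peq h sT) bT).
    by split => //; left.
  have [p0 pp] := (point_iff p lQ Fw2 w20 pQ).1 (conj (inSpread_peq h sT) bT).
  by split => //; right.
case=> p0 [h|h].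
  by exists P; do 2!split => //; apply/(point_iff p lP Fw1 w10 pP).
by exists Q; do 2!split => //; apply/(point_iff p lQ Fw2 w20 pQ).
Qed.
End Main.

Theorem theorem5p3 (K : finFieldType) (q : nat) (tau : K)
  (M : 'M[K]_3) (c : 'rV[K]_6) (P Q : 'rV[K]_3) :
  #|K| = (q ^ 2)%N ->
  (q ^ 2 - 1)%N.-primitive_root tau ->
  M \in unitmx ->
  Fconic q c ->
  secant q M ->
  P != 0 -> Q != 0 -> linf P -> linf Q ->
  (forall X : 'rV[K]_3, X != 0 -> linf X -> (inCplus M c X <-> peq X P \/ peq X Q)) ->
  (exists (N : 'M[K]_(3,5)) (c' : 'rV[K]_6),
      Fconic4 q N c'
      /\ (forall p, inCC q tau M c p <-> inConic4 q N c' p)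
      /\ (forall x : 'rV[K]_3, Fvec q x -> x != 0 -> inBB q tau M (x *m N))
      /\ (~ peq P Q -> ~ inB q M P -> ~ inB q M Q ->
            special q N c' (gpt q tau P) (gpt q tau Q)))
  /\ (forall p, (inOO q tau M c p /\ sinf p) <-> (inSpread q tau P p \/ inSpread q tau Q p))
  /\ (peq P Q ->
        inB q M P /\
        exists p0 : 'rV[K]_5,
          (forall p, (inSpread q tau P p /\ inBB q tau M p) <-> (p != 0 /\ peq p p0))
          /\ (forall p, (inCC q tau M c p /\ sinf p) <-> (p != 0 /\ peq p p0)))
  /\ (~ peq P Q -> inB q M P -> inB q M Q ->
        exists p1 p2 : 'rV[K]_5, ~ peq p1 p2
          /\ (forall p, (inSpread q tau P p /\ inBB q tau M p) <-> (p != 0 /\ peq p p1))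
          /\ (forall p, (inSpread q tau Q p /\ inBB q tau M p) <-> (p != 0 /\ peq p p2))
          /\ (forall p, (inCC q tau M c p /\ sinf p) <->
                        (p != 0 /\ (peq p p1 \/ peq p p2)))).
Proof.
move=> hq htau hM hc hsec P0 Q0 lP lQ hPQ.
have [lam [m [hlam [hm hcol]]]] := exists_lam hq hM hsec.
exact: (main_result hq htau hM hc hlam hm hcol P0 Q0 lP lQ hPQ).
Qed.
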